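(* Let $f$ be a transcendental meromorphic function projectable via $\exp_1$, written as $f(z)=\ell z+\Phi(e^{2\pi iz})$ with $\ell\in\mathbb{Z}$ and $\Phi$ meromorphic in $\mathbb{C}^*$, and let $g$ be its exponential projection. Then $z^*$ is a pseudoperiodic point of $f$ of minimal type $(p,\sigma)$, where $p\ge1$ and $\sigma\in\mathbb{Z}$, if and only if $e^{2\pi iz^*}$ is a periodic point of $g$ of minimal period $p$. In this case $z^*$ is a solution of $$(\ell^p-1)z+\sum_{j=0}^{p-1}\ell^{p-1-j}\,\Phi\big(g^j(e^{2\pi iz})\big)=\sigma.$$
   Context: $\exp_1(z)=e^{2\pi iz}$; $f$ is projectable via $\exp_1$ if there is $g$ with $g\circ\exp_1=\exp_1\circ f$ wherever defined; then $g(w)=w^\ell e^{2\pi i\Phi(w)}$. A point $z^*\in\mathbb{C}\setminus f^{-1}(\infty)$ is a pseudoperiodic point of type $(p,\sigma)$ of $f$ if $f^p(z^* )=z^*+\sigma$ for some $p\ge1$, $\sigma\in\mathbb{Z}$; it is of minimal type $(p,\sigma)$ if $p$ is the smallest natural number with this property. *)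

(* Defs.v *)
(* Complex numbers: mathcomp-real-closed's R[i]
   over an arbitrary R : realType, viewed as a normed module over itself
   (R[i])^o, so that [derivable F z 1] is complex differentiability. *)
From HB Require Import structures.
From mathcomp Require Import all_boot all_order all_algebra.
From mathcomp Require Import all_classical all_reals all_analysis.
From mathcomp Require Import complex.
Import Order.TTheory GRing.Theory Num.Theory.
Import numFieldNormedType.Exports.

Set Implicit Arguments.
Unset Strict Implicit.
Unset Printing Implicit Defensive.

Local Open Scope ring_scope.
Local Open Scope classical_set_scope.

Notation Cplx R := ((R[i])^o).

Section Defs.
Variable R : realType.
Local Notation C := (Cplx R).

Definition cexp (z : C) : C :=
  ((expR (@complex.Re R z) * cos (@complex.Im R z)) +i*
   (expR (@complex.Re R z) * sin (@complex.Im R z)))%C.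

Definition exp1 (z : C) : C := cexp (2%:R * ((pi : R)%:C)%C * 'i%C * z).

(* F is meromorphic on the open set U with pole set P (values of F on P are
   irrelevant junk): the poles are contained in U and do not accumulate in U,
   F is holomorphic (complex differentiable) at every point of U \ P, and
   F(z) -> infinity (i.e. 1/F(z) -> 0) at every pole. *)
Definition meromorphic_on (U : set C) (F : C -> C) (P : set C) : Prop :=
  [/\ open U, P `<=` U,
      (forall z, U z -> \forall w \near z^', ~ P w),
      (forall z, U z -> ~ P z -> derivable F z 1) &
      (forall p, P p -> (fun x => (F x)^-1) @ p^' --> (0 : C))].

Definition rational_mero (F : C -> C) (P : set C) : Prop :=
  exists (p q : {poly R[i]}), q != 0 /\
    forall z : C, ~ P z -> F z * q.[z] = p.[z].

Definition transcendental_mero (F : C -> C) (P : set C) : Prop :=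
  ~ rational_mero F P.

Definition exp_proj (l : int) (Phi : C -> C) (w : C) : C :=
  w ^ l * exp1 (Phi w).

Definition exp_proj_dom (PPhi : set C) : set C :=
  [set w | w != 0 /\ ~ PPhi w].

Definition iter_defined (D : set C) (h : C -> C) (n : nat) (z : C) : Prop :=
  forall j : nat, (j < n)%N -> D (iter j h z).

Definition pseudoperiodic (f : C -> C) (Pf : set C) (p : nat) (sigma : int)
  (z : C) : Prop :=
  [/\ (1 <= p)%N, iter_defined (~` Pf) f p z & iter p f z = z + sigma%:~R].

Definition pseudoperiodic_min (f : C -> C) (Pf : set C) (p : nat)
  (sigma : int) (z : C) : Prop :=
  pseudoperiodic f Pf p sigma z /\
  forall (q : nat) (s : int), (1 <= q < p)%N -> ~ pseudoperiodic f Pf q s z.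

Definition periodic_min (D : set C) (h : C -> C) (p : nat) (w : C) : Prop :=
  [/\ (1 <= p)%N, iter_defined D h p w, iter p h w = w &
      forall q : nat, (1 <= q < p)%N -> iter q h w <> w].

End Defs.

(* Main.v *)
Require Import Defs.
From HB Require Import structures.
From mathcomp Require Import all_boot all_order all_algebra.
From mathcomp Require Import all_classical all_reals all_analysis.
From mathcomp Require Import complex.
From mathcomp Require Import ring lra zify.
Import Order.TTheory GRing.Theory Num.Theory.
Import numFieldNormedType.Exports.
Local Open Scope ring_scope.
Local Open Scope classical_set_scope.

Section S.
Variable R : realType.
Local Notation C := (Cplx R).

Lemma cexpD (u v : C) : cexp (u + v) = cexp u * cexp v.
Proof.
case: u => a b; case: v => c d.
rewrite /cexp /=.
rewrite -[((_ +i* _)%C * (_ +i* _)%C)]/(_ +i* _)%C.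
rewrite expRD cosD sinD.
congr (_ +i* _)%C; ring.
Qed.

Lemma exp1E (a b : R) : exp1 (a +i* b)%C =
  ((expR (- (2 * pi * b)) * cos (2 * pi * a)) +i* (expR (- (2 * pi * b)) * sin (2 * pi * a)))%C.
Proof.
rewrite /exp1 /cexp.
congr ((expR _ * cos _) +i* (expR _ * sin _))%C; rewrite /= ; ring.
Qed.

Lemma exp1D (a b : C) : exp1 (a + b) = exp1 a * exp1 b.
Proof. by rewrite /exp1 mulrDr cexpD. Qed.

Lemma exp1_0 : exp1 (0 : C) = 1.
Proof.
have -> : (0 : C) = (0 +i* 0)%C by [].
by rewrite exp1E !mulr0 oppr0 expR0 cos0 sin0 mulr1 mulr0.
Qed.

Lemma exp1_1 : exp1 (1 : C) = 1.
Proof.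
have -> : (1 : C) = (1 +i* 0)%C by [].
rewrite exp1E !mulr0 oppr0 expR0 !mul1r mulr1.
have -> : 2 * pi = pi *+ 2 :> R by rewrite mulr_natl.
by rewrite cos2pi sin2pi.
Qed.

Lemma exp1_neq0 (z : C) : exp1 z != 0.
Proof.
case: z => a b; rewrite exp1E; apply/eqP => /eqP; rewrite eq_complex /= => /andP[/eqP h1 /eqP h2].
have hE := expR_gt0 (- (2 * pi * b)).
have hc : cos (2 * pi * a) = 0.
  by move/eqP: h1; rewrite mulf_eq0 gt_eqF //= => /eqP.
have hs : sin (2 * pi * a) = 0.
  by move/eqP: h2; rewrite mulf_eq0 gt_eqF //= => /eqP.
by have := cos2Dsin2 (2 * pi * a); rewrite hc hs expr0n /= addr0 => /eqP; rewrite eq_sym oner_eq0.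
Qed.

Lemma exp1N (a : C) : exp1 (- a) = (exp1 a)^-1.
Proof.
apply: (mulfI (exp1_neq0 a)); rewrite -exp1D subrr exp1_0 divff //; exact: exp1_neq0.
Qed.

Lemma exp1_nat (n : nat) : exp1 (n%:R : C) = 1.
Proof.
elim: n => [|n IH]; first exact: exp1_0.
by rewrite -natr1 exp1D IH exp1_1 mulr1.
Qed.

Lemma exp1_int (k : int) : exp1 (k%:~R : C) = 1.
Proof.
case: k => n; first exact: exp1_nat.
by rewrite NegzE mulrNz exp1N exp1_nat invr1.
Qed.

Lemma exp1_natM (n : nat) (z : C) : exp1 (n%:R * z) = exp1 z ^+ n.
Proof.
elim: n => [|n IH]; first by rewrite mul0r exp1_0 expr0.
by rewrite -natr1 mulrDl mul1r exp1D IH exprSr.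
Qed.

Lemma exp1_intM (l : int) (z : C) : exp1 (l%:~R * z) = exp1 z ^ l.
Proof.
case: l => n; first exact: exp1_natM.
by rewrite NegzE mulrNz mulNr exp1N exp1_natM.
Qed.

Lemma intC (k : int) : (k%:~R : C) = ((k%:~R : R) +i* 0)%C.
Proof. by rewrite -(rmorph_int (real_complex R)). Qed.


Lemma cos_int (k : int) : cos (2 * pi * k%:~R) = 1 :> R /\ sin (2 * pi * k%:~R) = 0 :> R.
Proof.
have := exp1_int k; rewrite intC exp1E mulr0 oppr0 expR0 !mul1r.
by move/eqP; rewrite eq_complex /= => /andP[/eqP -> /eqP ->].
Qed.

Lemma cos_eq1_small (s : R) : 0 <= s <= 1/2 -> cos (2 * pi * s) = 1 -> s = 0.
Proof.
move=> /andP[s0 s1] hc.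
have hp := pi_gt0 R.
have : cos (2 * pi * s) = cos 0 by rewrite hc cos0.
move/cos_inj.
rewrite !in_itv /= lexx pi_ge0 /=.
have h1 : 0 <= 2 * pi * s by rewrite !mulr_ge0 // ltW.
have h2 : 2 * pi * s <= pi by nra.
rewrite h1 h2 => /(_ isT isT) /eqP; rewrite !mulf_eq0 (gt_eqF hp) pnatr_eq0 /= => /eqP //.
Qed.

Lemma exp1_eq1 (t : C) : exp1 t = 1 -> exists k : int, t = k%:~R.
Proof.
case: t => a b; rewrite exp1E => /eqP; rewrite eq_complex /= => /andP[/eqP h1 /eqP h2].
have hE := expR_gt0 (- (2 * pi * b)).
have hp := pi_gt0 R.
have hs : sin (2 * pi * a) = 0.
  by move/eqP: h2; rewrite mulf_eq0 gt_eqF //= => /eqP.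
have hc : cos (2 * pi * a) = 1.
  have hn := sin0cos1 hs.
  have [hh|hh] := ltP 0 (cos (2 * pi * a)).
    by rewrite gtr0_norm in hn.
  rewrite ler0_norm // in hn; exfalso; nra.
have hb : b = 0.
  have : expR (- (2 * pi * b)) = expR 0 by rewrite expR0; move: h1; rewrite hc mulr1.
  move/expR_inj/eqP; rewrite oppr_eq0 !mulf_eq0 (gt_eqF hp) pnatr_eq0 /= => /eqP //.
subst b.
set k := Num.floor a.
have hk1 : (k%:~R : R) <= a by apply: real_floor_le; exact: num_real.
have hk2 : a < (k + 1)%:~R by apply: real_floorD1_gt; exact: num_real.
rewrite intrD in hk2.
have [ck sk] := cos_int k.
have hr : cos (2 * pi * (a - k%:~R)) = 1.
  by rewrite mulrBr cosB hc ck sk !mulr1 mulr0 addr0.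
exists k; rewrite intC; congr (_ +i* _)%C.
case: (lerP (a - k%:~R) (1/2)) => hh.
  have := @cos_eq1_small (a - k%:~R); rewrite hh subr_ge0 hk1 => /(_ isT hr) /eqP.
  by rewrite subr_eq0 => /eqP.
exfalso.
have : cos (2 * pi * (1 - (a - k%:~R))) = 1.
  rewrite -cosN.
  have -> : - (2 * pi * (1 - (a - k%:~R))) = 2 * pi * (a - k%:~R) - pi *+ 2.
    by rewrite -mulr_natl; ring.
  by rewrite -(cosD2pi (2 * pi * (a - k%:~R) - pi *+ 2)) subrK hr.
have hk3 : a < k%:~R + 1 by exact: hk2.
move=> H.
have H1 : 0 <= 1 - (a - k%:~R) <= 1 / 2 by apply/andP; split; lra.
have := @cos_eq1_small _ H1 H; lra.
Qed.


Lemma exp1_eq (a b : C) : exp1 a = exp1 b -> exists k : int, a = b + k%:~R.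
Proof.
move=> h.
have : exp1 (a - b) = 1 by rewrite exp1D exp1N h divff // exp1_neq0.
move/exp1_eq1 => [k hk]; exists k; by rewrite -hk addrC subrK.
Qed.

Lemma exp1_shift (z : C) (k : int) : exp1 (z + k%:~R) = exp1 z.
Proof. by rewrite exp1D exp1_int mulr1. Qed.

Lemma iter_definedS (D : set C) h n x :
  iter_defined D h n.+1 x <-> iter_defined D h n x /\ D (iter n h x).
Proof.
split.
  move=> H; split; last exact: H.
  by move=> j hj; apply: H; rewrite ltnS ltnW.
move=> [H1 H2] j; rewrite ltnS leq_eqVlt => /orP[/eqP -> //|hj].
exact: H1.
Qed.

Lemma iter_defined_le (D : set C) h n m x :
  (m <= n)%N -> iter_defined D h n x -> iter_defined D h m x.
Proof. move=> hmn H j hj; apply: H; exact: leq_trans hj hmn. Qed.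

Section Main.
Variables (f Phi : C -> C) (Pf PPhi : set C) (l : int).
Hypothesis hP : Pf = (@exp1 R) @^-1` PPhi.
Hypothesis hf : forall z, ~ Pf z -> f z = l%:~R * z + Phi (exp1 z).
Local Notation g := (exp_proj l Phi).

Lemma exp1_f z : ~ Pf z -> exp1 (f z) = g (exp1 z).
Proof. by move=> h; rewrite hf // exp1D exp1_intM. Qed.

Lemma exp1_iter n z : iter_defined (~` Pf) f n z ->
  exp1 (iter n f z) = iter n g (exp1 z).
Proof.
elim: n => [//|n IH] /iter_definedS [H1 H2].
by rewrite iterS exp1_f // IH.
Qed.

Lemma def_equiv n z : iter_defined (~` Pf) f n z <->
  iter_defined (exp_proj_dom PPhi) g n (exp1 z).
Proof.
elim: n => [|n IH]; first by split => ? ?.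
rewrite !iter_definedS; split.
  move=> [H1 H2]; split; first by apply/IH.
  rewrite -exp1_iter //; split; first exact: exp1_neq0.
  by move=> hc; apply: H2; rewrite hP.
move=> [H1 [_ H2]]; have H1' : iter_defined (~` Pf) f n z by apply/IH.
split => //; rewrite hP /= exp1_iter //.
Qed.

Lemma iter_formula n z : iter_defined (~` Pf) f n z ->
  iter n f z = l%:~R ^+ n * z
     + \sum_(j < n) l%:~R ^+ (n - 1 - j) * Phi (iter j g (exp1 z)).
Proof.
elim: n => [|n IH]; first by rewrite big_ord0 expr0 mul1r addr0.
move=> /iter_definedS [H1 H2].
rewrite iterS hf // exp1_iter // IH // big_ord_recr /=.
have -> : (n.+1 - 1 - n = 0)%N by lia.
rewrite expr0 mul1r.
rewrite mulrDr mulrA -exprS mulr_sumr addrA; congr (_ + _ + _).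
apply: eq_bigr => j _; rewrite mulrA -exprS; congr (_ ^+ _ * _).
have := ltn_ord j; rewrite subn1 /=; lia.
Qed.

End Main.

End S.

Theorem lemma4p3 (R : realType) (f Phi : Cplx R -> Cplx R)
  (Pf PPhi : set (Cplx R)) (l : int) :
  meromorphic_on setT f Pf ->
  meromorphic_on [set w | w != 0] Phi PPhi ->
  transcendental_mero f Pf ->
  Pf = (@exp1 R) @^-1` PPhi ->
  (forall z, ~ Pf z -> f z = l%:~R * z + Phi (exp1 z)) ->
  forall (zs : Cplx R) (p : nat), (1 <= p)%N ->
  ((exists sigma : int, pseudoperiodic_min f Pf p sigma zs) <->
     periodic_min (exp_proj_dom PPhi) (exp_proj l Phi) p (exp1 zs)) /\
  (forall sigma : int, pseudoperiodic_min f Pf p sigma zs ->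
     (l%:~R ^+ p - 1) * zs
     + \sum_(j < p) l%:~R ^+ (p - 1 - j) * Phi (iter j (exp_proj l Phi) (exp1 zs))
     = sigma%:~R).
Proof.
move=> _ _ _ hP hf zs p hp.
have EI := @exp1_iter R f Phi Pf l hf.
have DE := @def_equiv R f Phi Pf PPhi l hP hf.
split.
  split.
    move=> [s [[_ Hd He] Hmin]]; split => //; first by apply/DE.
      by rewrite -EI // He exp1_shift.
    move=> q hq Hq.
    have Hdq : iter_defined (~` Pf) f q zs.
      apply: iter_defined_le Hd; case/andP: hq => _ /ltnW //.
    have := EI q zs Hdq; rewrite Hq => /exp1_eq [k hk].
    apply: (Hmin q k hq); split; [by case/andP: hq | done | done].
  move=> [_ Hd He Hmin].
  have Hdf : iter_defined (~` Pf) f p zs by apply/DE.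
  have := EI p zs Hdf; rewrite He => /exp1_eq [s hs].
  exists s; split; first by split.
  move=> q s' hq [_ Hdq Heq].
  apply: (Hmin q hq); rewrite -EI // Heq exp1_shift //.
move=> s [[_ Hd He] _].
have := @iter_formula R f Phi Pf l hf p zs Hd; rewrite He => H.
transitivity (l%:~R ^+ p * zs
     + \sum_(j < p) l%:~R ^+ (p - 1 - j) * Phi (iter j (exp_proj l Phi) (exp1 zs)) - zs); first ring.
rewrite -H; ring.
Qed.
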